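(* Let $(G,\cdot,N,\star,\odot)$ be a left skew bracoid, and for $g\in G$ let $\alpha(g):N\to N$ be the map ${}^{\alpha(g)}\eta=\overline{(g\odot e_N)}\star(g\odot\eta)\star\overline{\eta}$. Then for all $g,h\in G$ and $\mu,\eta\in N$: (1) ${}^{\alpha(g)}(\eta\star\mu)=({}^{\alpha(g)}\eta)\star\eta\star({}^{\alpha(g)}\mu)\star\overline{\eta}$; (2) ${}^{\alpha(g)}e_N={}^{\alpha(e_G)}\eta=e_N$; (3) ${}^{\alpha(g)}\overline{\eta}=\overline{\eta}\star\overline{({}^{\alpha(g)}\eta)}\star\eta$; (4) ${}^{\alpha(gh)}\eta=({}^{\alpha(g)}({}^{\alpha(h)}\eta))\star({}^{\alpha(h)}\eta)\star({}^{\alpha(g)}\eta)$.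
   Context: For a group $(N,\star)$, $e_N$ denotes its identity and $\overline{\eta}$ the inverse of $\eta$; for a group $(G,\cdot)$, $e_G$ is its identity. A left skew bracoid is a 5-tuple $(G,\cdot,N,\star,\odot)$ where $(G,\cdot)$ and $(N,\star)$ are groups and $\odot$ is a transitive (left) action of $(G,\cdot)$ on the set $N$ such that $g\odot(\mu\star\eta)=(g\odot\mu)\star\overline{(g\odot e_N)}\star(g\odot\eta)$ for all $g\in G$, $\mu,\eta\in N$. *)

(* Defs.v *)
Definition is_group {T : Type} (op : T -> T -> T) (e : T) (inv : T -> T) : Prop :=
  (forall a b c, op a (op b c) = op (op a b) c) /\
  (forall a, op e a = a /\ op a e = a) /\
  (forall a, op (inv a) a = e /\ op a (inv a) = e).

Definition is_left_action {G N : Type} (mulG : G -> G -> G) (eG : G)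
  (act : G -> N -> N) : Prop :=
  (forall x, act eG x = x) /\
  (forall g h x, act (mulG g h) x = act g (act h x)).

Definition is_transitive_action {G N : Type} (act : G -> N -> N) : Prop :=
  forall x y : N, exists g : G, act g x = y.

Definition is_left_skew_bracoid {G N : Type}
  (mulG : G -> G -> G) (eG : G) (invG : G -> G)
  (star : N -> N -> N) (eN : N) (invN : N -> N)
  (act : G -> N -> N) : Prop :=
  is_group mulG eG invG /\
  is_group star eN invN /\
  is_left_action mulG eG act /\
  is_transitive_action act /\
  (forall g mu eta,
     act g (star mu eta) = star (star (act g mu) (invN (act g eN))) (act g eta)).

Definition alpha {G N : Type} (star : N -> N -> N) (eN : N) (invN : N -> N)
  (act : G -> N -> N) (g : G) (eta : N) : N :=
  star (star (invN (act g eN)) (act g eta)) (invN eta).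

(* Main.v *)
Require Import Defs.

Section Grp.
Lemma grp_facts {T : Type} (op : T -> T -> T) (e : T) (inv : T -> T) :
  is_group op e inv ->
  (forall a b c, op (op a b) c = op a (op b c)) /\
  (forall a, op e a = a) /\ (forall a, op a e = a) /\
  (forall a, op a (inv a) = e) /\ (forall a, op (inv a) a = e) /\
  (forall a b, op a (op (inv a) b) = b) /\ (forall a b, op (inv a) (op a b) = b) /\
  (forall a b, inv (op a b) = op (inv b) (inv a)) /\
  (forall a, inv (inv a) = a) /\ inv e = e /\
  (forall a b c, op a b = op a c -> b = c).
Proof.
  intros [A [I V]].
  assert (A' : forall a b c, op (op a b) c = op a (op b c)) by (intros; now rewrite A).
  assert (L1 : forall a b, op a (op (inv a) b) = b)
    by (intros; rewrite A; destruct (V a) as [_ ->]; apply I).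
  assert (L2 : forall a b, op (inv a) (op a b) = b)
    by (intros; rewrite A; destruct (V a) as [-> _]; apply I).
  assert (C : forall a b c, op a b = op a c -> b = c).
  { intros a b c H. rewrite <- (L2 a b), <- (L2 a c), H. reflexivity. }
  assert (U : forall a b, op a b = e -> b = inv a).
  { intros a b H. apply (C a). rewrite H. symmetry; apply V. }
  assert (II : forall a, inv (inv a) = a).
  { intros a. symmetry. apply U. apply V. }
  assert (IM : forall a b, inv (op a b) = op (inv b) (inv a)).
  { intros a b. symmetry. apply U. rewrite A', L1. apply V. }
  assert (IE : inv e = e).
  { symmetry. apply U. apply I. }
  repeat split; try assumption; intros; try apply I; try apply V.
Qed.
End Grp.

Theorem lemma2p4 (G N : Type)
  (mulG : G -> G -> G) (eG : G) (invG : G -> G)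
  (star : N -> N -> N) (eN : N) (invN : N -> N)
  (act : G -> N -> N)
  (Hb : is_left_skew_bracoid mulG eG invG star eN invN act) :
  let a := alpha star eN invN act in
  (forall g eta mu,
     a g (star eta mu) = star (star (star (a g eta) eta) (a g mu)) (invN eta)) /\
  (forall g eta, a g eN = eN /\ a eG eta = eN) /\
  (forall g eta,
     a g (invN eta) = star (star (invN eta) (invN (a g eta))) eta) /\
  (forall g h eta,
     a (mulG g h) eta = star (star (a g (a h eta)) (a h eta)) (a g eta)).
Proof.
  destruct Hb as [_ [HN [[Ae Am] [_ Hbr]]]].
  destruct (grp_facts _ _ _ HN) as
    [A [I1 [I2 [V1 [V2 [L1 [L2 [IM [II [IE C]]]]]]]]]].
  assert (Ainv : forall g x, act g (invN x) =
            star (act g eN) (star (invN (act g x)) (act g eN))).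
  { intros g x. pose proof (Hbr g x (invN x)) as H. rewrite V1 in H.
    assert (E : star (act g eN) (star (invN (act g x))
        (star (star (act g x) (invN (act g eN))) (act g (invN x)))) = act g (invN x)).
    { repeat (rewrite ?A, ?L1, ?L2). reflexivity. }
    rewrite <- H in E. symmetry. exact E. }
  cbv zeta; unfold alpha.
  repeat split; intros.
  - rewrite Hbr. repeat (rewrite ?A, ?I1, ?I2, ?V1, ?V2, ?L1, ?L2, ?IM, ?II, ?IE). reflexivity.
  -  repeat (rewrite ?A, ?I1, ?I2, ?V1, ?V2, ?L1, ?L2, ?IM, ?II, ?IE); reflexivity.
  - rewrite !Ae; repeat (rewrite ?A, ?I1, ?I2, ?V1, ?V2, ?L1, ?L2, ?IM, ?II, ?IE); reflexivity.
  - rewrite Ainv. repeat (rewrite ?A, ?I1, ?I2, ?V1, ?V2, ?L1, ?L2, ?IM, ?II, ?IE). reflexivity.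
  - rewrite !Am. repeat rewrite Hbr. repeat rewrite Ainv.
    repeat (rewrite ?A, ?I1, ?I2, ?V1, ?V2, ?L1, ?L2, ?IM, ?II, ?IE). reflexivity.
Qed.
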